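(* Let $n\ge1$. For every $\sigma\in\mathfrak{S}_{n+1}$, $\psi_{FV}(\sigma)=\psi_{YZL}(\Psi(\sigma))$.
   Context: For $\sigma\in\mathfrak{S}_{n+1}$ define $\psi_{FV}(\sigma)=(s_1\cdots s_n,(p_1,\dots,p_n))$ where, with convention $\sigma(0)=\sigma(n+2)=0$ and peaks/valleys/double ascents/double descents being values $\sigma(i)$ with $\sigma(i-1)<\sigma(i)>\sigma(i+1)$ / $\sigma(i-1)>\sigma(i)<\sigma(i+1)$ / $\sigma(i-1)<\sigma(i)<\sigma(i+1)$ / $\sigma(i-1)>\sigma(i)>\sigma(i+1)$: $s_i=\textsc{U}$ if the value $i$ is a valley, $\textsc{D}$ if a peak, $\textsc{L}_b$ if a double ascent, $\textsc{L}_r$ if a double descent; and $p_i=\#\{j: \sigma^{-1}(i)<j<n+1,\ \sigma(j)<i<\sigma(j+1)\}$. Define $\psi_{YZL}(\sigma)=(s_1\cdots s_n,(p_1,\dots,p_n))$ by $s_i=\textsc{U}$ if $i<\sigma(i)$ and $i+1\le\sigma^{-1}(i+1)$; $s_i=\textsc{D}$ if $i\ge\sigma(i)$ and $i+1>\sigma^{-1}(i+1)$; $s_i=\textsc{L}_b$ if $i<\sigma(i)$ and $i+1>\sigma^{-1}(i+1)$; $s_i=\textsc{L}_r$ if $i\ge\sigma(i)$ and $i+1\le\sigma^{-1}(i+1)$; and $p_i=\mathsf{nest}_i\sigma=\#\{j:j<i<\sigma(i)<\sigma(j)\text{ or }\sigma(j)<\sigma(i)\le i<j\}$. The map $\Phi:\mathfrak{S}_m\to\mathfrak{S}_m$: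 for $\rho\in\mathfrak{S}_m$, a letter $\rho(i)$ is a descent top if $i\le m-1$ and $\rho(i)>\rho(i+1)$, a descent bottom if $i\ge2$ and $\rho(i-1)>\rho(i)$; otherwise a nondescent top (resp. bottom). For $x=\rho(i)$ let $c(x)=\#\{j:i<j<m,\ \rho(j+1)<x<\rho(j)\}$. Let $f$ (resp. $g$) be the increasing word of descent bottoms (resp. nondescent bottoms); $f'$ the arrangement of descent tops in which each letter $x$ has exactly $c(x)$ larger letters to its left; $g'$ the arrangement of nondescent tops in which each letter $x$ has exactly $c(x)$ smaller letters to its right. With the two-row array of top row $fg$ and bottom row $f'g'$, $\Phi(\rho)=\tau$ where $\tau(b)=a$ for each column (top $a$, bottom $b$). The map $\Psi:\mathfrak{S}_m\to\mathfrak{S}_m$: $\hat\rho\in\mathfrak{S}_{m+1}$ is $\hat\rho(i)=\rho(i)+1$ ($i\le m$), $\hat\rho(m+1)=1$; $\tau=\Phi(\hat\rho)$ satisfies $\tau(1)=m+1$, and $\Psi(\rho)=\tau(2)\cdots\tau(m+1)$. Here $\Psi$ is applied with $m=n+1$. *)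

(* Defs.v *)
(* Permutations of {1..m} are words w : seq nat with
   perm_eq w (iota 1 m); w(i) := nth 0 w (i-1) for 1 <= i <= m, and 0 otherwise
   (this implements the convention sigma(0) = sigma(m+1) = 0). *)
From mathcomp Require Import all_boot.
Set Implicit Arguments. Unset Strict Implicit. Unset Printing Implicit Defensive.

Inductive step := U | D | Lb | Lr.

Definition val (w : seq nat) (i : nat) : nat :=
  if i is 0 then 0 else nth 0 w i.-1.

Definition pos (w : seq nat) (x : nat) : nat := (index x w).+1.

Definition stepFV (w : seq nat) (i : nat) : step :=
  let k := pos w i in
  let a := val w k.-1 in
  let b := val w k.+1 in
  if (a < i) && (i > b) then D
  else if (a > i) && (i < b) then U
  else if (a < i) && (i < b) then Lb
  else Lr.

Definition pFV (n : nat) (w : seq nat) (i : nat) : nat :=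
  count (fun j => (pos w i < j < n.+1) && (val w j < i < val w j.+1))
        (iota 0 n.+2).

Definition psiFV (n : nat) (w : seq nat) : seq step * seq nat :=
  ([seq stepFV w i | i <- iota 1 n], [seq pFV n w i | i <- iota 1 n]).

Definition stepYZL (w : seq nat) (i : nat) : step :=
  let a := i < val w i in
  let b := i.+1 <= pos w i.+1 in
  if a && b then U
  else if ~~ a && ~~ b then D
  else if a && ~~ b then Lb
  else Lr.

Definition nest (n : nat) (w : seq nat) (i : nat) : nat :=
  count (fun j => ((j < i) && (i < val w i) && (val w i < val w j))
               || ((val w j < val w i) && (val w i <= i) && (i < j)))
        (iota 1 n.+1).

Definition psiYZL (n : nat) (w : seq nat) : seq step * seq nat :=
  ([seq stepYZL w i | i <- iota 1 n], [seq nest n w i | i <- iota 1 n]).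

Section PhiDef.
Variable rho : seq nat.
Let m := size rho.

Definition dtopP (i : nat) : bool := (i <= m.-1) && (val rho i > val rho i.+1).
Definition dbotP (i : nat) : bool := (2 <= i) && (val rho i.-1 > val rho i).

Definition cstat (x : nat) : nat :=
  let i := pos rho x in
  count (fun j => (i < j < m) && (val rho j.+1 < x < val rho j)) (iota 0 m).

Definition dtops : seq nat := [seq val rho i | i <- iota 1 m & dtopP i].
Definition ndtops : seq nat := [seq val rho i | i <- iota 1 m & ~~ dtopP i].

Definition fword : seq nat := sort leq [seq val rho i | i <- iota 1 m & dbotP i].
Definition gword : seq nat := sort leq [seq val rho i | i <- iota 1 m & ~~ dbotP i].

(* f' : the arrangement of descent tops in which each letter x has exactly
   c(x) larger letters to its left *)
Definition fword' : seq nat :=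
  head [::] [seq t <- permutations dtops |
             all (fun x => count (fun y => x < y) (take (index x t) t) == cstat x) t].

(* g' : the arrangement of nondescent tops in which each letter x has exactly
   c(x) smaller letters to its right *)
Definition gword' : seq nat :=
  head [::] [seq t <- permutations ndtops |
             all (fun x => count (fun y => y < x) (drop (index x t).+1 t) == cstat x) t].

(* tau(b) = a for each column (top a, bottom b) of the array (fg / f'g') *)
Definition Phi : seq nat :=
  [seq nth 0 (fword ++ gword) (index b (fword' ++ gword')) | b <- iota 1 m].
End PhiDef.

(* Psi : rho-hat = (rho+1) 1 ; Psi rho = tau(2) ... tau(m+1) with tau = Phi rho-hat *)
Definition rhohat (rho : seq nat) : seq nat := rcons [seq x.+1 | x <- rho] 1.
Definition Psi (rho : seq nat) : seq nat := behead (Phi (rhohat rho)).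

(* Main.v *)
Require Import Defs.
From mathcomp Require Import all_boot.
From mathcomp Require Import zify.
Set Implicit Arguments. Unset Strict Implicit. Unset Printing Implicit Defensive.


Lemma count_nth (P : pred nat) (s : seq nat) :
  count P s = count (fun j => P (nth 0 s j)) (iota 0 (size s)).
Proof. by rewrite -{1}(mkseq_nth 0 s) /mkseq count_map. Qed.

Lemma count_take_nth (P : pred nat) (s : seq nat) d : d <= size s ->
  count P (take d s) = count (fun j => P (nth 0 s j)) (iota 0 d).
Proof.
move=> hd; rewrite -{1}(mkseq_nth 0 s) /mkseq -map_take count_map take_iota.
by rewrite (minn_idPl hd).
Qed.

Lemma count_drop_nth (P : pred nat) (s : seq nat) d :
  count P (drop d s) = count (fun j => P (nth 0 s j)) (iota d (size s - d)).
Proof.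
by rewrite -{1}(mkseq_nth 0 s) /mkseq -map_drop count_map drop_iota.
Qed.

Lemma count_geq_iota (P : pred nat) s0 N a : s0 <= a <= s0 + N ->
  count (fun j => (a <= j) && P j) (iota s0 N) = count P (iota a (s0 + N - a)).
Proof.
move=> /andP [h1 h2].
have -> : N = (a - s0) + (s0 + N - a) by lia.
rewrite iotaD count_cat.
rewrite (@eq_in_count _ _ pred0); last first.
  by move=> j; rewrite mem_iota => /andP [_ hj]; have -> : (a <= j) = false by apply/negbTE; rewrite -ltnNge; lia.
rewrite count_pred0 add0n.
have -> : s0 + (a - s0) = a by lia.
have -> : s0 + (a - s0 + (s0 + N - a)) - a = s0 + N - a by lia.
apply: eq_in_count => j; rewrite mem_iota => /andP [hj _]; by rewrite hj.
Qed.

Lemma count_lt_iota (P : pred nat) s0 N a : s0 <= a <= s0 + N ->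
  count (fun j => (j < a) && P j) (iota s0 N) = count P (iota s0 (a - s0)).
Proof.
move=> /andP [h1 h2].
have -> : N = (a - s0) + (s0 + N - a) by lia.
rewrite iotaD count_cat.
rewrite [X in _ + X](@eq_in_count _ _ pred0); last first.
  by move=> j; rewrite mem_iota => /andP [hj _]; have -> : (j < a) = false by apply/negbTE; rewrite -leqNgt; lia.
rewrite count_pred0 addn0.
apply: eq_in_count => j; rewrite mem_iota => /andP [_ hj].
by have -> : j < a by lia.
Qed.

Lemma tele (v : nat -> nat) y a d :
  count (fun j => (v j < y) && (y <= v j.+1)) (iota a d) + (y <= v a) =
  count (fun j => (v j.+1 < y) && (y <= v j)) (iota a d) + (y <= v (a + d)).
Proof.
elim: d a => [|d IH] a /=; first by rewrite addn0.
have := IH a.+1; rewrite addSnnS.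
case: (leqP y (v a)); case: (leqP y (v a.+1)) => /= h1 h2; lia.
Qed.

Lemma count_le3 (P Q R S T : pred nat) (s : seq nat) :
  (forall j, j \in s -> P j + Q j + R j <= S j + T j) ->
  count P s + count Q s + count R s <= count S s + count T s.
Proof.
elim: s => [|x s IH] //= h.
have := h x (mem_head _ _).
have := IH (fun j hj => h j (mem_behead (s:=x::s) hj)). lia.
Qed.

Lemma count_eq2 (P Q S T : pred nat) (s : seq nat) :
  (forall j, j \in s -> P j + Q j = S j + T j) ->
  count P s + count Q s = count S s + count T s.
Proof.
elim: s => [|x s IH] //= h.
have := h x (mem_head _ _).
have := IH (fun j hj => h j (mem_behead (s:=x::s) hj)). lia.
Qed.

Lemma size_split (s : seq nat) y : y \notin s ->
  size s = count (fun z => y < z) s + count (fun z => z < y) s.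
Proof.
elim: s => [|x s IH] //=; rewrite in_cons negb_or => /andP [hx hs].
rewrite (IH hs); case: (ltngtP y x) => h /=; try lia; by rewrite h eqxx in hx.
Qed.

Lemma nth_lt_count (s : seq nat) q y : sorted ltn s -> q < size s ->
  (nth 0 s q < y) = (q < count (fun z => z < y) s).
Proof.
elim: s q => [|a s IH] q //= hs hq.
have hs' : sorted ltn s := path_sorted hs.
have hall : all (fun z => a < z) s by move: hs; rewrite (path_sortedE ltn_trans) => /andP [].
case: (ltnP a y) => hay /=.
  case: q hq => [|q] hq /=; first by rewrite hay.
  by rewrite (IH q hs' hq) add1n ltnS.
have h0 : count (fun z => z < y) s = 0.
  rewrite (@eq_in_count _ _ pred0) ?count_pred0 // => z hz.
  have := allP hall z hz; rewrite /=; move=> hz'; apply/negbTE; rewrite -leqNgt; lia.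
rewrite h0 /=; case: q hq => [|q] hq /=; first by apply/negbTE; rewrite -leqNgt.
apply/negbTE; rewrite -leqNgt.
have := allP hall (nth 0 s q) (mem_nth 0 hq); lia.
Qed.

Lemma split_uniq (u w u' w' : seq nat) x : uniq (u ++ x :: w) ->
  u ++ x :: w = u' ++ x :: w' -> u = u'.
Proof.
move=> hu he.
have hu' := hu; rewrite he in hu'.
have nx : forall a b, uniq (a ++ x :: b) -> x \notin a.
  move=> a b; rewrite cat_uniq => /and3P [_ h _]; apply/negP => hxa.
  by move/negP: h; apply; apply/hasP; exists x; rewrite ?mem_head.
have ix : forall a b, uniq (a ++ x :: b) -> index x (a ++ x :: b) = size a.
  move=> a b hab; rewrite index_cat (negbTE (nx _ _ hab)) /= eqxx; lia.
have hs : size u = size u' by rewrite -(ix _ _ hu) -(ix _ _ hu') he.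
by rewrite -(take_size_cat (x :: w) (erefl (size u))) he hs take_size_cat.
Qed.

Lemma mem_split (s : seq nat) x : x \in s -> exists u w, s = u ++ x :: w.
Proof. by case/splitPr => u w; exists u, w. Qed.

Definition goodL (R : rel nat) (c : nat -> nat) (t : seq nat) :=
  forall u x w, t = u ++ x :: w -> count (R x) u = c x.
Definition goodR (R : rel nat) (c : nat -> nat) (t : seq nat) :=
  forall u x w, t = u ++ x :: w -> count (R x) w = c x.

Lemma decomp_index (t : seq nat) x : x \in t ->
  t = take (index x t) t ++ x :: drop (index x t).+1 t.
Proof.
move=> hx; have hx' : index x t < size t by rewrite index_mem.
have e := drop_nth 0 hx'.
by rewrite (nth_index 0 hx) in e; rewrite -e cat_take_drop.
Qed.

Lemma goodL_index R c t : goodL R c t -> forall x, x \in t ->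
  count (R x) (take (index x t) t) = c x.
Proof. move=> h x hx; exact: (h _ _ _ (decomp_index hx)). Qed.

Lemma goodR_index R c t : goodR R c t -> forall x, x \in t ->
  count (R x) (drop (index x t).+1 t) = c x.
Proof. move=> h x hx; exact: (h _ _ _ (decomp_index hx)). Qed.

Lemma goodR_rev R c t : goodL R c (rev t) -> goodR R c t.
Proof.
move=> h u x w ht; rewrite -count_rev; apply: (h _ _ (rev u)).
by rewrite ht rev_cat rev_cons cat_rcons.
Qed.

Lemma ext_min (S : seq nat) : S != [::] ->
  exists2 z, z \in S & forall y, y \in S -> y != z -> (z < y) && ~~ (y < z).
Proof.
suff : S != [::] -> exists2 z, z \in S & forall y, y \in S -> z <= y.
  move=> h /h [z hz hmin]; exists z => // y hy hyz; have := hmin y hy.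
  move: hyz; rewrite neq_ltn; case/orP => h1 h2; lia.
elim: S => [|a S IH] // _; case: (altP (S =P [::])) => [->|hS].
  by exists a => [|y]; rewrite ?mem_head // inE => /eqP ->.
case: (IH hS) => z hz hm; case: (leqP a z) => haz.
  exists a; first exact: mem_head.
  move=> y; rewrite inE => /orP [/eqP ->//|hy]; have := hm y hy; lia.
exists z; first by rewrite inE hz orbT.
move=> y; rewrite inE => /orP [/eqP ->|hy]; [lia|exact: hm].
Qed.

Lemma ext_max (S : seq nat) : S != [::] ->
  exists2 z, z \in S & forall y, y \in S -> y != z -> (y < z) && ~~ (z < y).
Proof.
suff : S != [::] -> exists2 z, z \in S & forall y, y \in S -> y <= z.
  move=> h /h [z hz hmin]; exists z => // y hy hyz; have := hmin y hy.
  move: hyz; rewrite neq_ltn; case/orP => h1 h2; lia.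
elim: S => [|a S IH] // _; case: (altP (S =P [::])) => [->|hS].
  by exists a => [|y]; rewrite ?mem_head // inE => /eqP ->.
case: (IH hS) => z hz hm; case: (leqP z a) => haz.
  exists a; first exact: mem_head.
  move=> y; rewrite inE => /orP [/eqP ->//|hy]; have := hm y hy; lia.
exists z; first by rewrite inE hz orbT.
move=> y; rewrite inE => /orP [/eqP ->|hy]; [lia|exact: hm].
Qed.

Lemma exists_goodL (R : rel nat) (c : nat -> nat) :
  (forall y, ~~ R y y) ->
  (forall S : seq nat, S != [::] ->
     exists2 z, z \in S & forall y, y \in S -> y != z -> R z y && ~~ R y z) ->
  forall S, uniq S -> (forall x, x \in S -> c x <= count (R x) S) ->
  exists t, perm_eq t S /\ goodL R c t.
Proof.
move=> hirr hext S; move: {2}(size S) (leqnn (size S)) => N.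
elim: N S => [|N IH] S hsz hu hc.
  move: hsz; rewrite leqn0 => /nilP ->; exists [::]; split => // u x w.
  by case: u.
case: (altP (S =P [::])) => [->|hS].
  exists [::]; split => // u x w; by case: u.
case: (hext S hS) => z hz hzm.
set S' := rem z S.
have hpr : perm_eq S (z :: S') := perm_to_rem hz.
have hu' : uniq S' := rem_uniq z hu.
have memS' : forall y, y \in S' -> (y != z) && (y \in S).
  by move=> y; rewrite (mem_rem_uniq z hu) inE.
have hsz' : size S' <= N by rewrite size_rem //; lia.
have hc' : forall x, x \in S' -> c x <= count (R x) S'.
  move=> x hx; have /andP [hxz hxS] := memS' x hx.
  have := hc x hxS; rewrite (permP hpr) /=.
  by have /andP [_ /negbTE ->] := hzm x hxS hxz.
case: (IH S' hsz' hu' hc') => t' [ht'p ht'g].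
have hmt' : forall y, y \in t' -> (y != z) && (y \in S).
  by move=> y; rewrite (perm_mem ht'p); apply: memS'.
set p := c z.
have hp : p <= size t'.
  have := hc z hz; rewrite (permP hpr) /= (negbTE (hirr z)) add0n.
  move=> h; apply: (leq_trans h); rewrite (perm_size ht'p); exact: count_size.
set t := take p t' ++ z :: drop p t'.
have htp : perm_eq t S.
  have e1 : perm_eq t (z :: t').
    rewrite /t -cat1s (perm_catCA (take p t') [:: z] (drop p t')).
    by rewrite cat1s cat_take_drop.
  have e2 : perm_eq (z :: t') (z :: S') by rewrite perm_cons.
  by rewrite (perm_trans e1 (perm_trans e2 _)) // perm_sym.
have htu : uniq t by rewrite (perm_uniq htp).
exists t; split => // u x w ht.
case: (altP (x =P z)) => [exz|nxz].
  subst x.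
  have -> : u = take p t' by apply: (split_uniq (w := w) (w' := drop p t') (x := z)); rewrite -ht.
  suff : all (R z) (take p t') by rewrite all_count => /eqP ->; rewrite size_takel.
  apply/allP => y hy.
  have hy' : y \in t' by rewrite -(cat_take_drop p t') mem_cat hy.
  have /andP [hyz hyS] := hmt' y hy'.
  by have /andP [] := hzm y hyS hyz.
have hxt : x \in t by rewrite ht mem_cat mem_head orbT.
have hxt' : x \in t' by move: hxt; rewrite /t mem_cat inE (negbTE nxz) /= -mem_cat cat_take_drop.
have /andP [_ hxS] := hmt' x hxt'.
have hRxz : R x z = false by have /andP [_ /negbTE ->] := hzm x hxS nxz.
move: hxt; rewrite /t mem_cat inE (negbTE nxz) /= => /orP [hA|hB].
  case: (mem_split hA) => A1 [A2 eA].
  have -> : u = A1.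
    apply: (split_uniq (w := w) (w' := A2 ++ z :: drop p t') (x := x)); rewrite -ht //.
    by rewrite /t eA -catA.
  apply: (ht'g _ _ (A2 ++ drop p t')).
  by rewrite -{1}(cat_take_drop p t') eA -catA.
case: (mem_split hB) => B1 [B2 eB].
have -> : u = take p t' ++ z :: B1.
  apply: (split_uniq (w := w) (w' := B2) (x := x)); rewrite -ht //.
  by rewrite /t eB -catA.
rewrite count_cat /= hRxz add0n -count_cat.
apply: (ht'g _ _ B2).
by rewrite -{1}(cat_take_drop p t') eB -catA.
Qed.


Lemma count_cons (T : Type) (a : pred T) x l : count a (x :: l) = a x + count a l.
Proof. by []. Qed.

Section Main.
Variable n : nat.
Hypothesis hn : 0 < n.
Variable s : seq nat.
Hypothesis hs : perm_eq s (iota 1 n.+1).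

Local Notation r := (rhohat s).
Local Notation v := (Defs.val (rhohat s)).

Lemma size_s : size s = n.+1.
Proof. by rewrite (perm_size hs) size_iota. Qed.

Lemma size_r : size r = n.+2.
Proof. by rewrite /rhohat size_rcons size_map size_s. Qed.

Lemma v_s i : 1 <= i <= n.+1 -> v i = (Defs.val s i).+1.
Proof.
case: i => [|i] // /andP [_ hi] /=.
by rewrite /rhohat nth_rcons size_map size_s hi (nth_map 0) // size_s.
Qed.

Lemma v_m : v n.+2 = 1.
Proof. by rewrite /= /rhohat nth_rcons size_map size_s ltnn eqxx. Qed.

Lemma v_big i : n.+2 < i -> v i = 0.
Proof.
case: i => [|i] // hi /=; rewrite nth_default // size_r; lia.
Qed.

Lemma v_0 : v 0 = 0.
Proof. by []. Qed.

Lemma iota_first k : iota 1 k.+1 = 1 :: map S (iota 1 k).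
Proof.
change (1 :: iota (1 + 1) k = 1 :: map S (iota 1 k)); rewrite (iotaDl 1 1).
by congr cons; apply: eq_map.
Qed.

Lemma r_perm : perm_eq r (iota 1 n.+2).
Proof.
by rewrite /rhohat perm_rcons iota_first perm_cons perm_map.
Qed.

Lemma r_uniq : uniq r.
Proof. by rewrite (perm_uniq r_perm) iota_uniq. Qed.

Lemma mem_r x : (x \in r) = (1 <= x <= n.+2).
Proof. by rewrite (perm_mem r_perm) mem_iota; lia. Qed.

Lemma v_in i : 1 <= i <= n.+2 -> v i \in r.
Proof.
case: i => [|i] // /andP [_ hi] /=; apply: mem_nth; rewrite size_r; lia.
Qed.

Lemma v_range i : 1 <= i <= n.+2 -> 1 <= v i <= n.+2.
Proof. by move=> h; rewrite -mem_r v_in. Qed.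

Lemma v_inj i j : 1 <= i <= n.+2 -> 1 <= j <= n.+2 -> v i = v j -> i = j.
Proof.
case: i => [|i] //; case: j => [|j] // /andP [_ hi] /andP [_ hj] /= e.
have := (nth_uniq 0 (_ : i < size r) (_ : j < size r) r_uniq).
rewrite e eqxx size_r => h; apply/eqP; rewrite eqSS -h //.
Qed.

Lemma pos_range x : x \in r -> 1 <= pos r x <= n.+2.
Proof. by move=> hx; rewrite /pos -size_r ltnS index_mem hx. Qed.

Lemma v_pos x : x \in r -> v (pos r x) = x.
Proof. by move=> hx; rewrite /pos /= nth_index. Qed.

Lemma pos_v i : 1 <= i <= n.+2 -> pos r (v i) = i.
Proof.
move=> hi; apply: v_inj => //; first by apply: pos_range; apply: v_in.
by rewrite v_pos // v_in.
Qed.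

Lemma map_v : map v (iota 1 n.+2) = r.
Proof.
rewrite -{2}(mkseq_nth 0 r) /mkseq size_r (iotaDl 1 0) -map_comp.
by apply: eq_map => i.
Qed.

Lemma sort_perm (l : seq nat) : perm_eq (sort leq l) l.
Proof. by rewrite perm_sort perm_refl. Qed.

Definition desc j := v j.+1 < v j.

Lemma iota_last : iota 1 n.+2 = iota 1 n.+1 ++ [:: n.+2].
Proof. transitivity (iota 1 (n.+1 + 1)); first by rewrite addn1. by rewrite iotaD. Qed.


Lemma cnt_D (P : pred nat) :
  count P (dtops r) = count (fun j => desc j && P (v j)) (iota 1 n.+1).
Proof.
rewrite /dtops count_map count_filter size_r iota_last count_cat.
have -> : count (predI (preim v P) (dtopP r)) [:: n.+2] = 0.
  by rewrite /= /dtopP size_r /= ltnn andbF.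
rewrite addn0; apply: eq_in_count => j; rewrite mem_iota => hj.
rewrite /= /dtopP size_r /desc.
have -> : j <= n.+2.-1 by rewrite /=; lia.
by rewrite /= andbC.
Qed.

Lemma cnt_ND (P : pred nat) :
  count P (ndtops r) = count (fun j => ~~ desc j && P (v j)) (iota 1 n.+1) + P 1.
Proof.
rewrite /ndtops count_map count_filter size_r iota_last count_cat.
have -> : count (predI (preim v P) (predC (dtopP r))) [:: n.+2] = P 1.
  by rewrite /= /dtopP size_r /= ltnn andbT -v_m; case: (P _).
congr (_ + _); apply: eq_in_count => j; rewrite mem_iota => hj.
rewrite /= /dtopP size_r /desc.
have -> : j <= n.+2.-1 by rewrite /=; lia.
by rewrite /= andbC.
Qed.

Lemma cnt_F (P : pred nat) :
  count P (fword r) = count (fun j => desc j && P (v j.+1)) (iota 1 n.+1).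
Proof.
rewrite /fword (permP (sort_perm _)) count_map count_filter size_r iota_first.
rewrite [count _ (_ :: _)]/count -/(count _ _) count_map.
rewrite [X in X + _](_ : _ = 0); last by rewrite /= /dbotP andbF.
rewrite add0n; apply: eq_in_count => j; rewrite mem_iota => hj.
rewrite /= /dbotP /desc.
have -> : 1 < j.+1 by lia.
by rewrite /= andbC.
Qed.

Lemma cnt_G (P : pred nat) :
  count P (gword r) = P (v 1) + count (fun j => ~~ desc j && P (v j.+1)) (iota 1 n.+1).
Proof.
rewrite /gword (permP (sort_perm _)) count_map count_filter size_r iota_first.
rewrite [count _ (_ :: _)]/count -/(count _ _) count_map.
congr (_ + _); first by rewrite /= /dbotP andbT.
apply: eq_in_count => j; rewrite mem_iota => hj.
rewrite /= /dbotP /desc.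
have -> : 1 < j.+1 by lia.
by rewrite /= andbC.
Qed.

Lemma cform y : y \in r ->
  cstat r y = count (fun j => (pos r y < j) && (v j.+1 < y < v j)) (iota 1 n.+1).
Proof.
move=> hy; have := pos_range hy => hk.
rewrite /cstat size_r (_ : iota 0 n.+2 = 0 :: iota 1 n.+1) // count_cons.
rewrite [X in X + _](_ : _ = 0) //.
rewrite add0n; apply: eq_in_count => j; rewrite mem_iota => hj.
have -> : j < n.+2 by lia.
by rewrite andbT.
Qed.

Lemma mem_sel (Q : pred nat) x : x \in r ->
  (x \in [seq v i | i <- iota 1 (size r) & Q i]) = Q (pos r x).
Proof.
move=> hx; rewrite size_r; apply/mapP/idP.
  case=> i; rewrite mem_filter mem_iota => /andP [hQ hi] ->.
  by rewrite pos_v //; lia.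
move=> hQ; exists (pos r x); last by rewrite v_pos.
rewrite mem_filter hQ mem_iota /=; have := pos_range hx; lia.
Qed.

Lemma mem_D x : x \in r -> (x \in dtops r) = dtopP r (pos r x).
Proof. exact: mem_sel. Qed.
Lemma mem_ND x : x \in r -> (x \in ndtops r) = ~~ dtopP r (pos r x).
Proof. exact: (mem_sel (predC (dtopP r))). Qed.
Lemma mem_F x : x \in r -> (x \in fword r) = dbotP r (pos r x).
Proof. by move=> hx; rewrite /fword mem_sort; apply: mem_sel. Qed.
Lemma mem_G x : x \in r -> (x \in gword r) = ~~ dbotP r (pos r x).
Proof. by move=> hx; rewrite /gword mem_sort; apply: (mem_sel (predC (dbotP r))). Qed.

Lemma pos_le y : y \in r -> 2 <= y -> pos r y <= n.+1.
Proof.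
move=> hy hy2; have := pos_range hy; case/andP => h1 h2.
rewrite leq_eqVlt in h2; case/orP: h2 => [/eqP e|]; last by [].
have := v_pos hy; rewrite e v_m; lia.
Qed.

Lemma Tc y : y \in r -> 2 <= y ->
  cstat r y = count (fun j => (pos r y < j) && (v j < y < v j.+1)) (iota 1 n.+1)
              + (y <= v (pos r y).+1).
Proof.
move=> hy hy2; have hk := pos_range hy; have hk2 := pos_le hy hy2.
set k := pos r y in hk hk2 *.
have hvk : v k = y by rewrite v_pos.
have ht := tele v y k.+1 (n.+1 - k).
have ek : k.+1 + (n.+1 - k) = n.+2 by lia.
rewrite ek v_m in ht.
rewrite cform // -/k.
rewrite (@count_geq_iota _ 1 n.+1 k.+1) ?(@count_geq_iota (fun j => v j < y < v j.+1) 1 n.+1 k.+1); try lia.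
have -> : 1 + n.+1 - k.+1 = n.+1 - k by lia.
have hne : forall j, k.+1 <= j <= n.+2 -> v j != y.
  move=> j hj; apply/eqP => e; rewrite -hvk in e; have := v_inj _ _ e; lia.
rewrite (@eq_in_count _ (fun j => v j.+1 < y < v j) (fun j => (v j.+1 < y) && (y <= v j))); last first.
  move=> j; rewrite mem_iota => hj; have h := hne j.
  have : k < j <= n.+2 by lia.
  move/h; lia.
rewrite (@eq_in_count _ (fun j => v j < y < v j.+1) (fun j => (v j < y) && (y <= v j.+1))); last first.
  move=> j; rewrite mem_iota => hj; have h := hne j.+1.
  have : k < j.+1 <= n.+2 by lia.
  move/h; lia.
have e1 : (y <= 1) = false by apply/negbTE; rewrite -ltnNge.
by rewrite e1 addn0 in ht; rewrite ht.
Qed.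

Lemma Fi y : y \in r -> dtopP r (pos r y) ->
  count (fun z => z < y) (dtops r) + cstat r y + 1 <= count (fun z => z < y) (fword r).
Proof.
move=> hy hd; have hk := pos_range hy.
rewrite /dtopP size_r /= in hd; case/andP: hd => hk2 hd.
rewrite cnt_D cnt_F cform //.
set k := pos r y in hk hk2 hd *.
have hvk : v k = y by rewrite v_pos.
have h1 : count (pred1 k) (iota 1 n.+1) = 1.
  by rewrite count_uniq_mem ?iota_uniq // mem_iota; apply/eqP; rewrite eqb1; lia.
have := @count_le3 (fun j => desc j && (v j < y)) (fun j => (k < j) && (v j.+1 < y < v j))
   (pred1 k) (fun j => desc j && (v j.+1 < y)) pred0 (iota 1 n.+1).
rewrite h1 count_pred0 addn0; apply.
have hd' : v k.+1 < y by rewrite -hvk.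
clearbody k.
move=> j hj; case: (altP (j =P k)) => [->|hjk].
  rewrite /= /desc hvk !ltnn eqxx andbF /=; change (nth 0 r k) with (v k.+1).
  by rewrite hd'.
rewrite /= (negbTE hjk) /desc addn0.
set a := v j; set b := v j.+1.
case: (ltnP b a) => ?; case: (ltnP a y) => ?; case: (ltnP b y) => ?; case: (ltnP y a) => ?;
  case: (k < j); rewrite /=; lia.
Qed.

Lemma Cb y : y \in r -> cstat r y <= count (fun z => y < z) (dtops r).
Proof.
move=> hy; rewrite cnt_D cform //.
have := @count_le3 (fun j => (pos r y < j) && (v j.+1 < y < v j)) pred0 pred0
   (fun j => desc j && (y < v j)) pred0 (iota 1 n.+1).
rewrite !count_pred0 !addn0; apply.
move=> j hj /=; rewrite /desc !addn0.
set a := v j; set b := v j.+1.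
case: (ltnP b a) => ?; case: (ltnP b y) => ?; case: (ltnP y a) => ?;
  case: (pos r y < j); rewrite /=; lia.
Qed.

Lemma Gi y : y \in r -> 2 <= y ->
  count (fun z => z < y) (gword r) + cstat r y <= count (fun z => z < y) (ndtops r).
Proof.
move=> hy hy2; rewrite cnt_G cnt_ND cform //.
have ht := tele v y 1 n.+1.
rewrite (_ : 1 + n.+1 = n.+2) // v_m in ht.
have e1 : (y <= 1) = false by apply/negbTE; rewrite -ltnNge.
rewrite e1 addn0 in ht.
have e2 : (1 < y) = true by [].
rewrite e2.
have := @count_eq2 (fun j => ~~ desc j && (v j < y)) pred0
   (fun j => ~~ desc j && (v j.+1 < y)) (fun j => (v j < y) && (y <= v j.+1)) (iota 1 n.+1).
rewrite count_pred0 addn0 => -> ; last first.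
  move=> j hj /=; rewrite /desc addn0.
  set a := v j; set b := v j.+1.
  case: (ltnP b a) => ?; case: (ltnP b y) => ?; case: (ltnP a y) => ?; case: (leqP y b) => ?;
    rewrite /=; lia.
have := @count_le3 (fun j => (pos r y < j) && (v j.+1 < y < v j)) pred0 pred0
   (fun j => (v j.+1 < y) && (y <= v j)) pred0 (iota 1 n.+1).
rewrite !count_pred0 !addn0 => h.
have {h} h : count (fun j => (pos r y < j) && (v j.+1 < y < v j)) (iota 1 n.+1)
   <= count (fun j => (v j.+1 < y) && (y <= v j)) (iota 1 n.+1).
  apply: h => j hj /=; rewrite !addn0.
  set a := v j; set b := v j.+1.
  case: (ltnP b y) => ?; case: (ltnP y a) => ?; case: (leqP y a) => ?;
    case: (pos r y < j); rewrite /=; lia.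
move: ht h; case: (ltnP (v 1) y) => h1; rewrite /=; lia.
Qed.

Lemma c_pos y : y \in r -> 2 <= y -> ~~ dtopP r (pos r y) -> 1 <= cstat r y.
Proof.
move=> hy hy2 hd; rewrite Tc //.
have hk2 := pos_le hy hy2.
move: hd; rewrite /dtopP size_r; have -> : n.+2.-1 = n.+1 by [].
rewrite hk2 andTb -leqNgt v_pos // => hd.
by rewrite hd addn1.
Qed.

Lemma v_le i : v i <= n.+2.
Proof.
case: (ltnP n.+2 i) => h; first by rewrite v_big.
case: i h => [|i] h //; have := v_range (i := i.+1); lia.
Qed.

Lemma DND_perm : perm_eq (dtops r ++ ndtops r) r.
Proof.
rewrite /dtops /ndtops -map_cat -[X in perm_eq _ X]map_v size_r perm_map //.
by rewrite (perm_filterC (dtopP r)).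
Qed.

Lemma FG_perm : perm_eq (fword r ++ gword r) r.
Proof.
have e : perm_eq (fword r ++ gword r)
   ([seq v i | i <- iota 1 (size r) & dbotP r i] ++ [seq v i | i <- iota 1 (size r) & ~~ dbotP r i]).
  by apply: perm_cat; apply: sort_perm.
apply: (perm_trans e).
rewrite -map_cat -[X in perm_eq _ X]map_v size_r perm_map //.
by rewrite (perm_filterC (dbotP r)).
Qed.

Lemma D_uniq : uniq (dtops r).
Proof. by have := r_uniq; rewrite -(perm_uniq DND_perm) cat_uniq => /andP []. Qed.
Lemma ND_uniq : uniq (ndtops r).
Proof. by have := r_uniq; rewrite -(perm_uniq DND_perm) cat_uniq => /and3P []. Qed.
Lemma F_uniq : uniq (fword r).
Proof. by have := r_uniq; rewrite -(perm_uniq FG_perm) cat_uniq => /andP []. Qed.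
Lemma G_uniq : uniq (gword r).
Proof. by have := r_uniq; rewrite -(perm_uniq FG_perm) cat_uniq => /and3P []. Qed.

Lemma D_sub x : x \in dtops r -> x \in r.
Proof. by move=> hx; rewrite -(perm_mem DND_perm) mem_cat hx. Qed.
Lemma ND_sub x : x \in ndtops r -> x \in r.
Proof. by move=> hx; rewrite -(perm_mem DND_perm) mem_cat hx orbT. Qed.
Lemma F_sub x : x \in fword r -> x \in r.
Proof. by move=> hx; rewrite -(perm_mem FG_perm) mem_cat hx. Qed.
Lemma G_sub x : x \in gword r -> x \in r.
Proof. by move=> hx; rewrite -(perm_mem FG_perm) mem_cat hx orbT. Qed.

Lemma F_sorted : sorted ltn (fword r).
Proof. by rewrite ltn_sorted_uniq_leq F_uniq sort_sorted //; apply: leq_total. Qed.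
Lemma G_sorted : sorted ltn (gword r).
Proof. by rewrite ltn_sorted_uniq_leq G_uniq sort_sorted //; apply: leq_total. Qed.

Lemma head_mem (l : seq (seq nat)) x : x \in l -> head [::] l \in l.
Proof. by case: l => // a l _; rewrite mem_head. Qed.

Lemma cstat1 : cstat r 1 = 0.
Proof.
rewrite cform ?mem_r //; apply/eqP; rewrite -leqn0 -(count_pred0 (iota 1 n.+1)).
have := @count_le3 (fun j => (pos r 1 < j) && (v j.+1 < 1 < v j)) pred0 pred0 pred0 pred0 (iota 1 n.+1).
rewrite !count_pred0 !addn0; apply => j; rewrite mem_iota => hj.
have : 1 <= v j.+1 <= n.+2 by apply: v_range; lia.
set a := v j.+1; set b := v j.
case: (pos r 1 < j); case: (ltnP a 1) => ?; rewrite /=; lia.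
Qed.

Lemma F'_spec : perm_eq (fword' r) (dtops r) /\
  all (fun x => count (fun y => x < y) (take (index x (fword' r)) (fword' r)) == cstat r x) (fword' r).
Proof.
have [t [htp htg]] := @exists_goodL ltn (cstat r) (fun y => negbT (ltnn y)) ext_min (dtops r) D_uniq
  (fun x hx => Cb (D_sub hx)).
have ht : t \in [seq t <- permutations (dtops r) |
             all (fun x => count (fun y => x < y) (take (index x t) t) == cstat r x) t].
  rewrite mem_filter mem_permutations htp andbT.
  apply/allP => x hx; apply/eqP; exact: (goodL_index htg hx).
have := head_mem ht; rewrite -/(fword' r) mem_filter mem_permutations.
by case/andP => h1 h2; split.
Qed.

Lemma G'_spec : perm_eq (gword' r) (ndtops r) /\
  all (fun x => count (fun y => y < x) (drop (index x (gword' r)).+1 (gword' r)) == cstat r x) (gword' r).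
Proof.
have hb : forall x, x \in ndtops r -> cstat r x <= count ((fun x y => y < x) x) (ndtops r).
  move=> x hx; have hxr := ND_sub hx.
  case: (ltnP x 2) => hx2.
    have -> : x = 1 by move: hxr; rewrite mem_r; lia.
    by rewrite cstat1.
  have := Gi hxr hx2; lia.
have [t [htp htg]] := @exists_goodL (fun x y => y < x) (cstat r) (fun y => negbT (ltnn y)) ext_max
  (ndtops r) ND_uniq hb.
have htg' : goodR (fun x y => y < x) (cstat r) (rev t) by apply: goodR_rev; rewrite revK.
have ht : rev t \in [seq t <- permutations (ndtops r) |
             all (fun x => count (fun y => y < x) (drop (index x t).+1 t) == cstat r x) t].
  rewrite mem_filter mem_permutations perm_rev htp andbT.
  apply/allP => x hx; apply/eqP; exact: (goodR_index htg' hx).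
have := head_mem ht; rewrite -/(gword' r) mem_filter mem_permutations.
by case/andP => h1 h2; split.
Qed.

Local Notation F := (fword r).
Local Notation G := (gword r).
Local Notation F' := (fword' r).
Local Notation G' := (gword' r).

Lemma F'_perm : perm_eq F' (dtops r). Proof. by case: F'_spec. Qed.
Lemma G'_perm : perm_eq G' (ndtops r). Proof. by case: G'_spec. Qed.
Lemma F'_uniq : uniq F'. Proof. by rewrite (perm_uniq F'_perm) D_uniq. Qed.
Lemma G'_uniq : uniq G'. Proof. by rewrite (perm_uniq G'_perm) ND_uniq. Qed.

Lemma F'_cond x : x \in F' ->
  count (fun y => x < y) (take (index x F') F') = cstat r x.
Proof. by case: F'_spec => _ /allP h /h /eqP. Qed.
Lemma G'_cond x : x \in G' ->
  count (fun y => y < x) (drop (index x G').+1 G') = cstat r x.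
Proof. by case: G'_spec => _ /allP h /h /eqP. Qed.

Lemma size_FF' : size F = size F'.
Proof.
rewrite (perm_size F'_perm) -!count_predT cnt_F cnt_D.
by apply: eq_count => j; rewrite !andbT.
Qed.

Lemma size_FG : size F + size G = n.+2.
Proof. by rewrite -size_cat (perm_size FG_perm) size_r. Qed.

Lemma size_GG' : size G = size G'.
Proof.
have := size_FG; rewrite size_FF' (perm_size G'_perm).
have := perm_size DND_perm; rewrite size_cat size_r (perm_size F'_perm); lia.
Qed.

Lemma uniq_notin_take (l : seq nat) q : uniq l -> q < size l -> nth 0 l q \notin take q l.
Proof.
move=> hu hq; have e := drop_nth 0 hq.
have : uniq (take q l ++ drop q l) by rewrite cat_take_drop.
rewrite e cat_uniq => /and3P [_ h _]; apply/negP => hin.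
by move/negP: h; apply; apply/hasP; exists (nth 0 l q); rewrite ?mem_head.
Qed.

Lemma kF q : q < size F' -> nth 0 F q < nth 0 F' q.
Proof.
move=> hq; set y := nth 0 F' q.
have hyF : y \in F' by apply: mem_nth.
have hyD : y \in dtops r by rewrite -(perm_mem F'_perm).
have hyr := D_sub hyD.
have hidx : index y F' = q by apply: index_uniq => //; apply: F'_uniq.
have hc := F'_cond hyF; rewrite hidx in hc.
have hni : y \notin take q F' by apply: uniq_notin_take => //; apply: F'_uniq.
have hsz : size (take q F') = q by rewrite size_takel // ltnW.
have hsp := size_split hni; rewrite hsz hc in hsp.
have hle : count (fun z => z < y) (take q F') <= count (fun z => z < y) (dtops r).
  rewrite -(permP F'_perm) -[X in _ <= count _ X](cat_take_drop q F') count_cat; exact: leq_addr.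
have hfi := Fi hyr (_ : dtopP r (pos r y)); rewrite -mem_D // in hfi.
have := hfi hyD => h.
rewrite nth_lt_count ?F_sorted ?size_FF' //; lia.
Qed.

Lemma kG p : p < size G' -> nth 0 G' p <= nth 0 G p.
Proof.
move=> hp; set y := nth 0 G' p.
have hyG : y \in G' by apply: mem_nth.
have hyN : y \in ndtops r by rewrite -(perm_mem G'_perm).
have hyr := ND_sub hyN.
have hpG : p < size G by rewrite size_GG'.
case: (ltnP y 2) => hy2.
  have : nth 0 G p \in r by apply: G_sub; apply: mem_nth.
  rewrite mem_r; lia.
have hidx : index y G' = p by apply: index_uniq => //; apply: G'_uniq.
have hc := G'_cond hyG; rewrite hidx in hc.
have e := drop_nth 0 hp; rewrite -/y in e.
have hcnt : count (fun z => z < y) (ndtops r) = count (fun z => z < y) (take p G') + cstat r y.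
  rewrite -(permP G'_perm) -[X in count _ X = _](cat_take_drop p G') e count_cat /= ltnn add0n hc //.
have hsz : count (fun z => z < y) (take p G') <= p.
  by apply: (leq_trans (count_size _ _)); rewrite size_take; case: ltnP => //; lia.
have hgi := Gi hyr hy2.
rewrite leqNgt nth_lt_count ?G_sorted //; lia.
Qed.

Local Notation A := (F' ++ G').
Local Notation B := (F ++ G).

Lemma A_perm : perm_eq A r.
Proof. apply: perm_trans DND_perm; exact: perm_cat F'_perm G'_perm. Qed.
Lemma A_uniq : uniq A. Proof. by rewrite (perm_uniq A_perm) r_uniq. Qed.
Lemma B_uniq : uniq B. Proof. by rewrite (perm_uniq FG_perm) r_uniq. Qed.
Lemma size_A : size A = n.+2. Proof. by rewrite (perm_size A_perm) size_r. Qed.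
Lemma size_B : size B = n.+2. Proof. by rewrite (perm_size FG_perm) size_r. Qed.
Lemma mem_A x : (x \in A) = (x \in r). Proof. exact: (perm_mem A_perm x). Qed.
Lemma mem_B x : (x \in B) = (x \in r). Proof. exact: (perm_mem FG_perm x). Qed.

Lemma K q : q < n.+2 -> (nth 0 B q < nth 0 A q) = (q < size F).
Proof.
move=> hq; rewrite !nth_cat -size_FF'.
case: (ltnP q (size F)) => h; first by rewrite kF // -size_FF'.
apply/negbTE; rewrite -leqNgt; apply: kG.
have := size_FG; rewrite size_GG'; lia.
Qed.

Lemma sorted_lt_iff (l : seq nat) q q0 : sorted ltn l -> q < size l -> q0 < size l ->
  (nth 0 l q < nth 0 l q0) = (q < q0).
Proof.
move=> hl hq hq0; have hh := sorted_ltn_nth ltn_trans 0 hl.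
case: (ltngtP q q0) => h.
- by apply: hh.
- by apply/negbTE; rewrite -leqNgt ltnW //; apply: hh.
- by rewrite h ltnn.
Qed.

Lemma dt_idx x : x \in r -> (x \in dtops r) = (index x A < size F).
Proof.
move=> hx; have e : (x \in F') = (x \in dtops r) := perm_mem F'_perm x.
rewrite index_cat size_FF' -e.
case: ifP => h; first by rewrite index_mem h.
by apply/esym/negbTE; rewrite -leqNgt leq_addr.
Qed.

Lemma db_idx x : x \in r -> (x \in fword r) = (index x B < size F).
Proof.
move=> hx; rewrite index_cat.
case: ifP => h; first by rewrite index_mem h.
by apply/esym/negbTE; rewrite -leqNgt leq_addr.
Qed.

Definition tau b := nth 0 B (index b A).
Definition tinv x := nth 0 A (index x B).

Lemma tau_tinv x : x \in r -> tau (tinv x) = x.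
Proof.
move=> hx; rewrite /tau /tinv index_uniq ?A_uniq ?nth_index ?mem_B //.
by rewrite size_A -size_B index_mem mem_B.
Qed.

Lemma tau_r x : x \in r -> tau x \in r.
Proof. by move=> hx; rewrite -mem_B mem_nth // size_B -size_A index_mem mem_A. Qed.
Lemma tinv_r x : x \in r -> tinv x \in r.
Proof. by move=> hx; rewrite -mem_A mem_nth // size_A -size_B index_mem mem_B. Qed.

Lemma tau_inj x y : x \in r -> y \in r -> tau x = tau y -> x = y.
Proof.
move=> hx hy; rewrite /tau => e.
have hxi : index x A < size B by rewrite size_B -size_A index_mem mem_A.
have hyi : index y A < size B by rewrite size_B -size_A index_mem mem_A.
have := nth_uniq 0 hxi hyi B_uniq; rewrite e eqxx => h.
have ei : index x A = index y A by apply/eqP; rewrite -h.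
by rewrite -(nth_index 0 (_ : x \in A)) ?mem_A // ei nth_index // mem_A.
Qed.

Lemma Ka x : x \in r -> (x <= tau x) = (x \notin dtops r).
Proof.
move=> hx; rewrite dt_idx // -K; last by rewrite -size_A index_mem mem_A.
by rewrite nth_index ?mem_A // -leqNgt.
Qed.

Lemma Kb x : x \in r -> (x < tinv x) = (x \in fword r).
Proof.
move=> hx; rewrite db_idx // -K; last by rewrite -size_B index_mem mem_B.
by rewrite /tinv nth_index ?mem_B.
Qed.

Lemma pos1 : pos r 1 = n.+2.
Proof. have h := @pos_v n.+2; rewrite v_m in h; by apply: h; rewrite leqnn. Qed.

Lemma one_ND : 1 \in ndtops r.
Proof. by rewrite mem_ND ?mem_r // pos1 /dtopP size_r /= ltnn. Qed.
Lemma one_notD : 1 \notin dtops r.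
Proof. by rewrite mem_D ?mem_r // pos1 /dtopP size_r /= ltnn. Qed.

Lemma G'_last : 0 < size G' /\ nth 0 G' (size G' - 1) = 1.
Proof.
have h1 : 1 \in G' by rewrite (perm_mem G'_perm) one_ND.
have hsz : 0 < size G' by case: (G') h1.
split => //.
set z := nth 0 G' (size G' - 1).
have hz : z \in G' by apply: mem_nth; rewrite subn1 ltn_predL.
have hzN : z \in ndtops r by rewrite -(perm_mem G'_perm).
have hzr := ND_sub hzN.
have hc := G'_cond hz.
have hi : index z G' = size G' - 1.
  by apply: index_uniq; [rewrite subn1 ltn_predL | exact: G'_uniq].
rewrite hi in hc.
rewrite drop_oversize /= in hc; last by rewrite subn1 prednK.
case: (ltnP z 2) => hz2.
  by move: hzr; rewrite mem_r; lia.
have := c_pos hzr hz2; rewrite -mem_ND // => h; have := h hzN; lia.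
Qed.

Lemma idx1_A : index 1 A = n.+1.
Proof.
have h1 : (1 \in F') = false by rewrite (perm_mem F'_perm); apply/negbTE; apply: one_notD.
case: G'_last => hsz hl.
have hi : index 1 G' = size G' - 1.
  by rewrite -{1}hl; apply: index_uniq; [rewrite subn1 ltn_predL | exact: G'_uniq].
rewrite index_cat h1 hi.
have := perm_size DND_perm; rewrite size_cat size_r -(perm_size F'_perm) -(perm_size G'_perm).
set a := size F'; set b := size G' in hsz *; lia.
Qed.

Lemma m_in_G : n.+2 \in G.
Proof.
have hm : n.+2 \in r by rewrite mem_r leqnn.
rewrite mem_G // /dbotP v_pos //.
by apply/nandP; right; rewrite -leqNgt; exact: v_le.
Qed.

Lemma G_last : nth 0 G (size G - 1) = n.+2.
Proof.
have hm := m_in_G.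
have hsz : 0 < size G by case: (G) hm.
have hlt : size G - 1 < size G by rewrite subn1 ltn_predL.
have hl : nth 0 G (size G - 1) \in r by apply: G_sub; apply: mem_nth.
have hsl : sorted leq G by have := G_sorted; rewrite ltn_sorted_uniq_leq => /andP [].
have hi : index (n.+2) G < size G by rewrite index_mem.
have := sorted_leq_nth leq_trans leqnn 0 hsl (index (n.+2) G) (size G - 1).
rewrite nth_index // => h.
have : n.+2 <= nth 0 G (size G - 1).
  apply: h; [by rewrite inE | by rewrite inE |].
  by move: hi; set a := size G; set b := index _ _; lia.
move: hl; rewrite mem_r; lia.
Qed.

Lemma tau1 : tau 1 = n.+2.
Proof.
rewrite /tau idx1_A nth_cat.
have := size_FG; have := G'_last; rewrite -size_GG' => -[hsz _] e.
have -> : n.+1 < size F = false by apply/negbTE; lia.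
have -> : n.+1 - size F = size G - 1 by lia.
exact: G_last.
Qed.

Lemma behead_map_cons (f : nat -> nat) x l : behead (map f (x :: l)) = map f l.
Proof. by []. Qed.

Local Notation pi := (Psi s).

Lemma Psi_eq : pi = map (fun j => tau j.+1) (iota 1 n.+1).
Proof.
rewrite /Psi /Phi size_r iota_first behead_map_cons -map_comp.
by apply: eq_map.
Qed.

Lemma val_pi i : 1 <= i <= n.+1 -> Defs.val pi i = tau i.+1.
Proof.
case: i => [|i] // /andP [_ hi].
by rewrite /= Psi_eq (nth_map 0) ?size_iota // nth_iota.
Qed.

Lemma pi_uniq : uniq pi.
Proof.
rewrite Psi_eq map_inj_in_uniq ?iota_uniq // => a b.
rewrite !mem_iota => ha hb e; have := tau_inj _ _ e.
rewrite !mem_r; move=> h; have : a.+1 = b.+1 by apply: h; lia.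
by case.
Qed.

Lemma pos_pi x : x \in r -> x != n.+2 -> pos pi x = (tinv x).-1.
Proof.
move=> hx hxm.
have ht := tinv_r hx; have htt := tau_tinv hx.
have ht1 : tinv x != 1.
  by apply/eqP => e; rewrite e tau1 in htt; rewrite htt eqxx in hxm.
move: ht; rewrite mem_r => ht.
have hi : (tinv x - 2) < size pi by rewrite Psi_eq size_map size_iota; lia.
have hnth : nth 0 pi (tinv x - 2) = x.
  rewrite Psi_eq (nth_map 0) ?size_iota ?nth_iota; try lia.
  by have -> : (1 + (tinv x - 2)).+1 = tinv x by lia.
rewrite /pos -{1}hnth index_uniq ?pi_uniq //; lia.
Qed.

Lemma pos_s i : 1 <= i <= n.+1 -> pos s i = pos r i.+1.
Proof.
move=> hi; have his : i \in s by rewrite (perm_mem hs) mem_iota; lia.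
rewrite /pos /rhohat -cats1 index_cat.
have -> : (i.+1 \in [seq x.+1 | x <- s]) = true by rewrite mem_map // => a b [].
by rewrite (index_map (f := succn)) // => a b [].
Qed.

Lemma cmp j i : 1 <= i -> j <= n.+2 ->
  ((Defs.val s j < i) = (v j < i.+1)) /\ ((i < Defs.val s j) = (i.+1 < v j)).
Proof.
move=> hi hj; case: j hj => [|j] hj; first by rewrite /=; split; [rewrite hi | rewrite ltn0].
case: (ltnP j n.+1) => hjn.
  by rewrite v_s; last lia.
have -> : j = n.+1 by lia.
rewrite v_m /= nth_default ?size_s //; split; lia.
Qed.

Definition code (dt db : bool) : step :=
  if ~~ db && dt then D else if db && ~~ dt then U else if ~~ db && ~~ dt then Lb else Lr.

Lemma stepFV_eq i : 1 <= i <= n ->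
  stepFV s i = code (dtopP r (pos r i.+1)) (dbotP r (pos r i.+1)).
Proof.
move=> hi; have hx : i.+1 \in r by rewrite mem_r; lia.
have hk := pos_range hx; have hk2 : pos r i.+1 <= n.+1 by apply: pos_le => //; lia.
rewrite /stepFV pos_s; last by lia.
set k := pos r i.+1 in hk hk2 *.
have hvk : v k = i.+1 by rewrite v_pos.
clearbody k.
have hi1 : 1 <= i by lia.
have hk3 : k.-1 <= n.+2 by lia.
have hk4 : k.+1 <= n.+2 by lia.
have [c1 c2] := @cmp k.-1 i hi1 hk3.
have [c3 c4] := @cmp k.+1 i hi1 hk4.
rewrite c1 c2 c3 c4.
have hdt : dtopP r k = (v k.+1 < i.+1).
  by rewrite /dtopP size_r hvk; have -> : k <= n.+2.-1 by rewrite /=; lia.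
have hdb : dbotP r k = (i.+1 < v k.-1).
  rewrite /dbotP hvk; case: (ltnP 1 k) => h //=.
  by have -> : k = 1 by lia.
have hne1 : v k.-1 != i.+1.
  case: (ltnP 1 k) => h.
    apply/eqP => e; rewrite -hvk in e; have := v_inj _ _ e; lia.
  by have -> : k = 1 by lia.
have hne2 : v k.+1 != i.+1.
  apply/eqP => e; rewrite -hvk in e; have := v_inj _ _ e; lia.
rewrite hdt hdb /code.
move: hne1 hne2; set a := v k.-1; set b := v k.+1; set x := i.+1.
case: (ltngtP a x) => h1; case: (ltngtP b x) => h2 //=; rewrite ?h1 ?h2 ?eqxx //.
Qed.

Lemma stepYZL_eq i : 1 <= i <= n ->
  stepYZL pi i = code (dtopP r (pos r i.+1)) (dbotP r (pos r i.+1)).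
Proof.
move=> hi; have hx : i.+1 \in r by rewrite mem_r; lia.
have hxm : i.+1 != n.+2 by apply/eqP; lia.
rewrite /stepYZL val_pi; last by lia.
rewrite pos_pi //.
have e1 : (i < tau i.+1) = (i.+1 \notin dtops r) by rewrite -Ka.
have e2 : (i.+1 <= (tinv i.+1).-1) = (i.+1 \in fword r).
  rewrite -Kb //; have := tinv_r hx; rewrite mem_r; set t := tinv _; lia.
rewrite e1 e2 -mem_D // -mem_F // /code.
by case: (i.+1 \in dtops r); case: (i.+1 \in fword r).
Qed.

Lemma pFV_eq i : 1 <= i <= n ->
  pFV n s i = cstat r i.+1 - ~~ dtopP r (pos r i.+1).
Proof.
move=> hi; have hx : i.+1 \in r by rewrite mem_r; lia.
have hk := pos_range hx; have hk2 : pos r i.+1 <= n.+1 by apply: pos_le => //; lia.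
rewrite Tc //; last by lia.
have hdt : dtopP r (pos r i.+1) = (v (pos r i.+1).+1 < i.+1).
  by rewrite /dtopP size_r v_pos //; have -> : pos r i.+1 <= n.+2.-1 by rewrite /=; lia.
rewrite hdt -leqNgt addnK.
rewrite /pFV pos_s; last by lia.
rewrite (_ : iota 0 n.+2 = 0 :: iota 1 n.+1) // count_cons.
rewrite [X in X + _](_ : _ = 0) ?add0n //.
apply: eq_in_count => j; rewrite mem_iota => hj.
case: (ltnP j n.+1) => hjn.
  have hi1 : 1 <= i by lia.
  have hj1 : j <= n.+2 by lia.
  have hj2 : j.+1 <= n.+2 by lia.
  have [c1 _] := @cmp j i hi1 hj1.
  have [_ c4] := @cmp j.+1 i hi1 hj2.
  by rewrite c1 c4 andbT.
have -> : j = n.+1 by lia.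
rewrite andbF v_m.
by have -> : i.+1 < 1 = false by []; rewrite !andbF.
Qed.

Lemma tau_nthA q : q < n.+2 -> tau (nth 0 A q) = nth 0 B q.
Proof. by move=> hq; rewrite /tau index_uniq ?A_uniq // size_A. Qed.

Definition NPd x J := ((J < x) && (x <= tau x) && (tau x < tau J))
                      || ((tau J < tau x) && (tau x < x) && (x < J)).
Arguments NPd : simpl never.

Lemma nest_NP i : 1 <= i <= n ->
  nest n pi i = count (fun q => (nth 0 A q != 1) && NPd i.+1 (nth 0 A q)) (iota 0 n.+2).
Proof.
move=> hi; rewrite /nest.
rewrite (@eq_in_count _ _ (fun j => NPd i.+1 j.+1)); last first.
  move=> j; rewrite mem_iota => hj; rewrite !val_pi; try lia.
  by rewrite /NPd !ltnS.
have e : count (fun j => NPd i.+1 j.+1) (iota 1 n.+1) =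
         count (fun J => (J != 1) && NPd i.+1 J) (iota 1 n.+2).
  rewrite (iota_first n.+1) [X in _ = X]count_cons [X in _ = X + _](_ : _ = 0) // add0n [X in _ = X]count_map.
  apply: eq_in_count => j; rewrite mem_iota => hj /=.
  by have -> : j != 0 by lia.
rewrite e -(permP (perm_trans A_perm r_perm)) [X in X = _]count_nth size_A.
by [].
Qed.

Lemma nest_eq i : 1 <= i <= n ->
  nest n pi i = cstat r i.+1 - (i.+1 \notin dtops r).
Proof.
move=> hi; have hx : i.+1 \in r by rewrite mem_r; lia.
rewrite nest_NP //.
have hxA : i.+1 \in A by rewrite mem_A.
set q0 := index i.+1 A.
have hq0 : q0 < n.+2 by rewrite -size_A index_mem.
have htx : tau i.+1 = nth 0 B q0 by [].
have hFF := size_FF'.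
have hFG := size_FG.
have hGG := size_GG'.
case: (boolP (i.+1 \in dtops r)) => hdt.
  have hq0F : q0 < size F by rewrite -dt_idx.
  have e1 : (i.+1 <= tau i.+1) = false by rewrite Ka // hdt.
  have e2 : (tau i.+1 < i.+1) = true by rewrite ltnNge e1.
  have htxF : tau i.+1 = nth 0 F q0 by rewrite htx nth_cat hq0F.
  rewrite (@eq_in_count _ _ (fun q => (q < q0) && (i.+1 < nth 0 F' q))); last first.
    move=> q; rewrite mem_iota => hq; rewrite /= in hq.
    have hq' : q < n.+2 by lia.
    rewrite /NPd (tau_nthA hq') e1 e2 andbF andbT /=.
    have hK := K hq'.
    case: (ltnP q (size F)) => hqF.
      have ea : nth 0 A q = nth 0 F' q by rewrite nth_cat -hFF hqF.
      have eb : nth 0 B q = nth 0 F q by rewrite nth_cat hqF.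
      rewrite ea eb htxF sorted_lt_iff ?F_sorted //.
      case: (ltnP i.+1 (nth 0 F' q)) => h; rewrite ?andbF ?andFb //.
      by rewrite andbT; have -> : nth 0 F' q != 1 by apply/eqP => e; rewrite e in h.
    have {}hK : (nth 0 B q < nth 0 A q) = false by rewrite hK; apply/negbTE; rewrite -leqNgt.
    have hqq : (q < q0) = false by apply/negbTE; rewrite -leqNgt; apply: leq_trans hqF; apply: ltnW.
    rewrite hqq andFb.
    move: hK e2; set a := nth 0 A q; set b := nth 0 B q; set t := tau _ => hK e2.
    case: (ltnP b t) => h1; case: (ltnP i.+1 a) => h2; rewrite ?andbF ?andFb //=.
    have := negbT hK; rewrite -leqNgt; lia.
  have hle : 0 <= q0 <= 0 + n.+2 by lia.
  transitivity (count (fun q => i.+1 < nth 0 F' q) (iota 0 (q0 - 0))).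
    exact: (@count_lt_iota (fun q => i.+1 < nth 0 F' q) 0 n.+2 q0 hle).
  rewrite subn0 -count_take_nth; last by rewrite -hFF ltnW.
  have hxF' : i.+1 \in F' by rewrite (perm_mem F'_perm).
  have hidx : index i.+1 F' = q0 by rewrite /q0 index_cat hxF'.
  by rewrite -hidx F'_cond // subn0.
have hq0F : size F <= q0 by rewrite leqNgt -dt_idx.
have e1 : (i.+1 <= tau i.+1) = true by rewrite Ka.
have e2 : (tau i.+1 < i.+1) = false by rewrite ltnNge e1.
have hxF' : (i.+1 \in F') = false by rewrite (perm_mem F'_perm); apply/negbTE.
have hxG' : i.+1 \in G' by move: hxA; rewrite mem_cat hxF'.
have hq0e : q0 = size F' + index i.+1 G' by rewrite /q0 index_cat hxF'.
have htxG : tau i.+1 = nth 0 G (q0 - size F) by rewrite htx nth_cat ltnNge hq0F.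
rewrite (@eq_in_count _ _ (fun q => (q0.+1 <= q) && ((nth 0 A q != 1) && (nth 0 A q < i.+1)))); last first.
  move=> q; rewrite mem_iota => hq; rewrite /= in hq.
  have hq' : q < n.+2 by lia.
  rewrite /NPd (tau_nthA hq') e1 e2 andbF orbF andbT.
  have hK := K hq'.
  case: (ltnP q (size F)) => hqF.
    rewrite hqF in hK.
    have hqq : (q0.+1 <= q) = false.
      apply/negbTE; rewrite -ltnNge; move: hqF hq0F; set a := size F; lia.
    rewrite hqq andFb.
    move: hK e1; set a := nth 0 A q; set b := nth 0 B q; set t := tau _ => hK e1.
    case: (ltnP a i.+1) => h1; rewrite ?andbF ?andFb //=.
    case: (ltnP t b) => h2; rewrite ?andbF //=; lia.
  have eb : nth 0 B q = nth 0 G (q - size F) by rewrite nth_cat ltnNge hqF.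
  have s1 : q0 - size F < size G.
    by move: hq0 hq0F hFG; set a := size F; set b := size G; lia.
  have s2 : q - size F < size G.
    by move: hq' hqF hFG; set a := size F; set b := size G; lia.
  rewrite eb htxG (sorted_lt_iff G_sorted s1 s2).
  have -> : (q0 - size F < q - size F) = (q0.+1 <= q) by lia.
  by case: (q0.+1 <= q); case: (nth 0 A q != 1); case: (nth 0 A q < i.+1).
have hle : 0 <= q0.+1 <= 0 + n.+2 by lia.
transitivity (count (fun q => (nth 0 A q != 1) && (nth 0 A q < i.+1)) (iota q0.+1 (0 + n.+2 - q0.+1))).
  exact: (@count_geq_iota (fun q => (nth 0 A q != 1) && (nth 0 A q < i.+1)) 0 n.+2 q0.+1 hle).
have -> : 0 + n.+2 - q0.+1 = size A - q0.+1 by rewrite size_A.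
transitivity (count (fun y => (y != 1) && (y < i.+1)) (drop q0.+1 A)).
  by rewrite count_drop_nth.
set d := (index i.+1 G').+1.
have hdrop : drop q0.+1 A = drop d G'.
  rewrite drop_cat hq0e.
  have -> : (size F' + index i.+1 G').+1 < size F' = false by apply/negbTE; rewrite -leqNgt; lia.
  by congr drop; rewrite /d; lia.
rewrite hdrop -(G'_cond hxG') -/d.
have := @count_eq2 (fun y => y < i.+1) pred0 (fun y => (y != 1) && (y < i.+1)) (pred1 1) (drop d G').
rewrite count_pred0 addn0 => ->; last first.
  move=> y _ /=; case: (altP (y =P 1)) => [->|h] /=; lia.
have [hsz hl] := G'_last.
have hxi : index i.+1 G' < size G' by rewrite index_mem.
have hne : index i.+1 G' != size G' - 1.
  apply/eqP => e; have := nth_index 0 hxG'; rewrite e hl; lia.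
have hdle : d <= size G' - 1 by rewrite /d; move: hxi hne; set a := size G'; set b := index _ _; lia.
have h1 : 1 \in drop d G'.
  have hlt : size G' - 1 - d < size (drop d G').
    by rewrite size_drop; move: hdle hsz; set a := size G'; lia.
  have := mem_nth 0 hlt; rewrite nth_drop.
  have -> : d + (size G' - 1 - d) = size G' - 1 by move: hdle; set a := size G'; lia.
  by rewrite hl.
rewrite count_uniq_mem ?drop_uniq ?G'_uniq // h1 /=.
lia.
Qed.

End Main.

Unset Implicit Arguments.

Theorem theorem2p5 (n : nat) (hn : 1 <= n) (sigma : seq nat)
  (hsigma : perm_eq sigma (iota 1 n.+1)) :
  psiFV n sigma = psiYZL n (Psi sigma).
Proof.
rewrite /psiFV /psiYZL; congr pair; apply/eq_in_map => i; rewrite mem_iota => hi;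
  have hi' : 1 <= i <= n by lia.
  by rewrite (stepFV_eq hn hsigma hi') (stepYZL_eq hn hsigma hi').
rewrite (pFV_eq hn hsigma hi') (nest_eq hn hsigma hi') (mem_D hn hsigma) //.
rewrite (mem_r hn hsigma); lia.
Qed.
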